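(* Under the setting below, suppose that (P) is feasible for some $\gamma>1$ and that $m>0$ and $G^a>0$ entrywise for all $a$. Then: (1) there exist a bounded solution $\theta=(\theta^1,\dots,\theta^M)$ of (P) and a bounded solution $V$ of (D); (2) defining, for each $j=1,\dots,N-1$, $a(j):=\min\{a:[\theta^a]_j>0\}$ (which is well defined), the control $u(D_j)=u^{a(j)}$ is the optimal control on $D_j$; (3) letting $P^1_{T_u}\in\mathbb{R}^{(N-1)\times(N-1)}$ be the matrix whose $j$-th row equals the $j$-th row of $P^1_{T_{a(j)}}$, i.e. $[P^1_{T_u}]_{ji}=[P^1_{T_{a(j)}}]_{ji}$, there is a nonnegative vector $\mu\in\mathbb{R}^{N-1}$ satisfying $\gamma(P^1_{T_u})'\mu-\mu=-m$, and $\mu$ is a Lyapunov measure for the closed-loop (controlled) system.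
   Context: Finite-dimensional setting: $\mathcal{X}_N=\{D_1,\dots,D_N\}$ is a finite partition of a compact state space $X\subset\mathbb{R}^q$ with the attractor set $\mathcal{A}\subseteq D_N$; $\mathcal{U}_M=\{u^1,\dots,u^M\}$ is a finite set of control values; $\{\xi^1,\dots,\xi^L\}$ is a finite set of uncertainty values with probabilities $v^1,\dots,v^L\ge0$, $\sum_\ell v^\ell=1$. For the system $x_{n+1}=T(x_n,u_n,\xi_n)$, let $T_{u^a,\xi^\ell}=T(\cdot,u^a,\xi^\ell):X\to X$ and define the $N\times N$ Markov matrix $P_{T_{a,\ell}}$ by $[P_{T_{a,\ell}}]_{ij}=m_L(T_{u^a,\xi^\ell}^{-1}(D_j)\cap D_i)/m_L(D_i)$, $m_L$ the Lebesgue measure. Set $P_{T_a}=\sum_{\ell=1}^L v^\ell P_{T_{a,\ell}}$ and let $P^1_{T_a}\in\mathbb{R}^{(N-1)\times(N-1)}$ be the submatrix of its first $N-1$ rows and columns. Let $G^{a,\ell}\in\mathbb{R}^{N-1}$ be given cost vectors ($[G^{a,\ell}]_j$ is the cost of using $u^a$ on $D_j$ with uncertainty $\xi^\ell$) and $G^a=\sum_\ell v^\ell G^{a,\ell}$. Let $m\in\mathbb{R}^{N-1}$ be a given vector. Prime denotes transpose. Primal LP (P): minimize $\sum_{a=1}^M (G^a)'\theta^a$ over $\theta^1,\dots,\theta^M\in\mathbb{R}^{N-1}$, $\theta^a\ge0$, subject to $\gamma\sum_{a=1}^M(P^1_{T_a})'\theta^a-\sum_{a=1}^M\theta^a=-m$.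 Dual LP (D): maximize $m'V$ over $V\in\mathbb{R}^{N-1}$ subject to $V\le\gamma P^1_{T_a}V+G^a$ (entrywise) for all $a=1,\dots,M$. A (finite-dimensional) Lyapunov measure for a closed-loop matrix $P^1$ is a nonnegative vector $\mu$ with $\gamma (P^1)'\mu-\mu=-m$ for some $\gamma\ge1$ and $m>0$, so that in particular $(P^1)'\mu<\gamma^{-1}\mu$ entrywise. *)

(* Defs.v *)
From HB Require Import structures.
From mathcomp Require Import all_boot all_order all_algebra.
Set Implicit Arguments. Unset Strict Implicit. Unset Printing Implicit Defensive.
Import Order.TTheory GRing.Theory Num.Theory.
Local Open Scope ring_scope.

(* States D_1..D_N with N = n.+1; index ord_max (value n) is the attractor cell D_N.
   Column vectors of R^(N-1) are 'cV[R]_n. *)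

Definition sub1 (R : Type) (n : nat) (A : 'M[R]_(n.+1)) : 'M[R]_n :=
  \matrix_(i < n, j < n) A (widen_ord (leqnSn n) i) (widen_ord (leqnSn n) j).

Definition markov (R : numDomainType) (N : nat) (P : 'M[R]_N) : Prop :=
  (forall i j, 0 <= P i j) /\ (forall i, \sum_j P i j = 1).

Definition Pavg (R : numDomainType) (N M L : nat) (v : 'I_L -> R)
  (Pal : 'I_M -> 'I_L -> 'M[R]_N) (a : 'I_M) : 'M[R]_N :=
  \sum_(l < L) v l *: Pal a l.

Definition Gavg (R : numDomainType) (n M L : nat) (v : 'I_L -> R)
  (Gal : 'I_M -> 'I_L -> 'cV[R]_n) (a : 'I_M) : 'cV[R]_n :=
  \sum_(l < L) v l *: Gal a l.

Definition primal_feasible (R : numDomainType) (n M : nat) (gamma : R)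
  (P1 : 'I_M -> 'M[R]_n) (m : 'cV[R]_n) (theta : 'I_M -> 'cV[R]_n) : Prop :=
  (forall a j, 0 <= theta a j 0) /\
  gamma *: (\sum_(a < M) (P1 a)^T *m theta a) - \sum_(a < M) theta a = - m.

Definition primal_obj (R : numDomainType) (n M : nat)
  (G : 'I_M -> 'cV[R]_n) (theta : 'I_M -> 'cV[R]_n) : R :=
  \sum_(a < M) ((G a)^T *m theta a) 0 0.

(* "bounded solution" of (P): a feasible point attaining the (finite) minimum *)
Definition primal_optimal (R : numDomainType) (n M : nat) (gamma : R)
  (P1 : 'I_M -> 'M[R]_n) (G : 'I_M -> 'cV[R]_n) (m : 'cV[R]_n)
  (theta : 'I_M -> 'cV[R]_n) : Prop :=
  primal_feasible gamma P1 m theta /\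
  forall theta', primal_feasible gamma P1 m theta' ->
    primal_obj G theta <= primal_obj G theta'.

Definition dual_feasible (R : numDomainType) (n M : nat) (gamma : R)
  (P1 : 'I_M -> 'M[R]_n) (G : 'I_M -> 'cV[R]_n) (V : 'cV[R]_n) : Prop :=
  forall a j, V j 0 <= gamma * (P1 a *m V) j 0 + G a j 0.

Definition dual_optimal (R : numDomainType) (n M : nat) (gamma : R)
  (P1 : 'I_M -> 'M[R]_n) (G : 'I_M -> 'cV[R]_n) (m : 'cV[R]_n)
  (V : 'cV[R]_n) : Prop :=
  dual_feasible gamma P1 G V /\
  forall V', dual_feasible gamma P1 G V' -> (m^T *m V') 0 0 <= (m^T *m V) 0 0.

Definition first_pos (R : numDomainType) (n M : nat)
  (theta : 'I_M -> 'cV[R]_n) (j : 'I_n) (a : 'I_M) : Prop :=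
  0 < theta a j 0 /\ forall b : 'I_M, (b < a)%N -> ~~ (0 < theta b j 0).

Definition Pclosed (R : Type) (n M : nat) (P1 : 'I_M -> 'M[R]_n)
  (asel : 'I_n -> 'I_M) : 'M[R]_n :=
  \matrix_(j < n, i < n) P1 (asel j) j i.

Definition lyapunov_measure (R : numDomainType) (n : nat) (P1 : 'M[R]_n)
  (mu : 'cV[R]_n) : Prop :=
  (forall j, 0 <= mu j 0) /\
  exists (g : R) (m : 'cV[R]_n), 1 <= g /\ (forall j, 0 < m j 0) /\
    g *: (P1^T *m mu) - mu = - m.

(* Main.v *)
From HB Require Import structures.
From mathcomp Require Import all_boot all_order all_algebra.
From mathcomp Require Import ring lra.
Require Import Defs.
Import Order.TTheory GRing.Theory Num.Theory.
Set Implicit Arguments. Unset Strict Implicit.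
Local Open Scope ring_scope.

Section S.
Variable R : realFieldType.

Lemma entry1B n (A : 'M[R]_n) (y : 'cV[R]_n) j :
  ((1%:M - A) *m y) j 0 = y j 0 - \sum_k A j k * y k 0.
Proof. by rewrite mulmxBl mul1mx !mxE. Qed.

Lemma core_mono n (A : 'M[R]_n) (x : 'cV[R]_n) :
  (forall i j, 0 <= A i j) -> (forall j, 0 < x j 0) ->
  (forall j, (A *m x) j 0 < x j 0) ->
  forall y : 'cV[R]_n, (forall j, 0 <= ((1%:M - A) *m y) j 0) -> forall j, 0 <= y j 0.
Proof.
move=> A0 x0 Ax y By j.
pose F := fun k : 'I_n => y k 0 / x k 0.
have [k _ kmin] := @arg_minP _ _ _ j xpredT F isT.
set t := F k.
have ht : forall i, t * x i 0 <= y i 0.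
  by move=> i; rewrite -ler_pdivlMr // kmin.
suff t0 : 0 <= t by apply: le_trans (ht j); rewrite mulr_ge0 // ltW.
rewrite leNgt; apply/negP => tneg.
have yk : y k 0 = t * x k 0 by rewrite /t /F divfK // gt_eqF.
have := By k; rewrite entry1B subr_ge0 => H.
have H2 : t * (A *m x) k 0 <= \sum_i A k i * y i 0.
  rewrite mxE mulr_sumr; apply: ler_sum => i _.
  by rewrite mulrCA ler_wpM2l.
have H3 : t * x k 0 < t * (A *m x) k 0 by rewrite ltr_nM2l.
by have := lt_le_trans H3 (le_trans H2 H); rewrite -yk ltxx.
Qed.
Definition nninv n (B : 'M[R]_n) : bool :=
  (B \in unitmx) && [forall i, [forall j, 0 <= invmx B i j]].

Arguments nninv {n}.

Lemma unit_of_inj n (B : 'M[R]_n) :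
  (forall y : 'cV[R]_n, B *m y = 0 -> y = 0) -> B \in unitmx.
Proof.
move=> inj; rewrite -unitmx_tr -row_free_unit -kermx_eq0; apply/eqP.
apply/row_matrixP => i; rewrite row0.
have : row i (kermx B^T) *m B^T = 0 by rewrite -row_mul mulmx_ker row0.
move=> h; apply: trmx_inj; rewrite trmx0; apply: inj.
by move/(congr1 trmx): h; rewrite trmx_mul trmxK trmx0.
Qed.

Lemma core_nninv n (A : 'M[R]_n) (x : 'cV[R]_n) :
  (forall i j, 0 <= A i j) -> (forall j, 0 < x j 0) ->
  (forall j, (A *m x) j 0 < x j 0) -> nninv (1%:M - A).
Proof.
move=> A0 x0 Ax; have mono := core_mono A0 x0 Ax.
have U : (1%:M - A) \in unitmx.
  apply: unit_of_inj => y hy; apply/matrixP => i j; rewrite ord1 mxE.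
  apply/eqP; rewrite eq_le; apply/andP; split; last first.
    by apply: mono => k; rewrite hy mxE.
  rewrite -oppr_ge0; have -> : - y i 0 = (- y) i 0 by rewrite mxE.
  by apply: mono => k; rewrite mulmxN hy !mxE oppr0.
rewrite /nninv U; apply/forallP => i; apply/forallP => j.
have -> : invmx (1%:M - A) i j = (invmx (1%:M - A) *m delta_mx j (0 : 'I_1)) i 0.
  by rewrite -colE mxE.
apply: mono => k; rewrite mulmxA mulmxV // mul1mx mxE.
by case: (_ && _).
Qed.

Lemma nninv_tr n (B : 'M[R]_n) : nninv B -> nninv B^T.
Proof.
case/andP => U /forallP H; rewrite /nninv unitmx_tr U -trmx_inv.
by apply/forallP => i; apply/forallP => j; rewrite mxE; have /forallP := H j; apply.
Qed.

Lemma nninv_solve n (B : 'M[R]_n) (y : 'cV[R]_n) : nninv B ->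
  (forall j, 0 <= y j 0) ->
  (forall j, 0 <= (invmx B *m y) j 0) /\ B *m (invmx B *m y) = y.
Proof.
case/andP => U /forallP H y0; split; last by rewrite mulmxA mulmxV // mul1mx.
move=> j; rewrite mxE; apply: sumr_ge0 => k _; apply: mulr_ge0 => //.
by have /forallP := H j; apply.
Qed.

Lemma nninv_mono n (B : 'M[R]_n) (y : 'cV[R]_n) : nninv B ->
  (forall j, 0 <= (B *m y) j 0) -> forall j, 0 <= y j 0.
Proof.
move=> nB h j; have [h1 h2] := nninv_solve nB h.
have U : B \in unitmx by case/andP: nB.
by move: (h1 j); rewrite mulmxA mulVmx // mul1mx.
Qed.
End S.
Section MDP.
Variables (R : realFieldType) (n M : nat) (P1 : 'I_M -> 'M[R]_n)
  (G : 'I_M -> 'cV[R]_n) (m : 'cV[R]_n) (gamma : R).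
Hypothesis P0 : forall a i j, 0 <= P1 a i j.
Hypothesis G0 : forall a j, 0 < G a j 0.
Hypothesis m0 : forall j, 0 < m j 0.
Hypothesis g1 : 1 < gamma.

Lemma g0 : 0 <= gamma. Proof. by apply: ltW; apply: lt_trans g1. Qed.

Definition Pc (pi : 'I_n -> 'I_M) : 'M[R]_n := \matrix_(j < n, i < n) P1 (pi j) j i.
Definition Gc (pi : 'I_n -> 'I_M) : 'cV[R]_n := \col_j G (pi j) j 0.
Definition Bm pi := 1%:M - gamma *: Pc pi.
Definition proper pi := nninv (Bm pi).
Definition Vp pi := invmx (Bm pi) *m Gc pi.
Definition Q (W : 'cV[R]_n) a j := gamma * (P1 a *m W) j 0 + G a j 0.
Definition J pi := \sum_j m j 0 * Vp pi j 0.

Lemma PcE pi (W : 'cV[R]_n) j : (Pc pi *m W) j 0 = (P1 (pi j) *m W) j 0.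
Proof. by rewrite !mxE; apply: eq_bigr => i _; rewrite mxE. Qed.

Lemma BmE pi (W : 'cV[R]_n) j :
  (Bm pi *m W) j 0 = W j 0 - gamma * (P1 (pi j) *m W) j 0.
Proof.
rewrite /Bm mulmxBl mul1mx -scalemxAl !mxE; congr (_ - _ * _).
by apply: eq_bigr => i _; rewrite mxE.
Qed.

Lemma PW0 a (W : 'cV[R]_n) j : (forall k, 0 <= W k 0) -> 0 <= (P1 a *m W) j 0.
Proof. by move=> h; rewrite mxE; apply: sumr_ge0 => k _; apply: mulr_ge0. Qed.

Lemma proper_of pi (x : 'cV[R]_n) : (forall j, 0 < x j 0) ->
  (forall j, gamma * (P1 (pi j) *m x) j 0 < x j 0) -> proper pi.
Proof.
move=> x0 h; apply: (core_nninv (x := x)) => //.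
  by move=> i j; rewrite !mxE; apply: mulr_ge0; [apply: g0|apply: P0].
by move=> j; rewrite -scalemxAl mxE PcE.
Qed.

Lemma proper_V pi : proper pi ->
  (forall j, Vp pi j 0 = Q (Vp pi) (pi j) j) /\ (forall j, 0 < Vp pi j 0).
Proof.
move=> pr; have Gc0 : forall j, 0 <= Gc pi j 0 by move=> j; rewrite mxE; apply: ltW.
have [h1 h2] := nninv_solve pr Gc0.
have E : forall j, Vp pi j 0 = Q (Vp pi) (pi j) j.
  move=> j; have := congr1 (fun X : 'cV[R]_n => X j 0) h2.
  rewrite /= BmE -/(Vp pi) => E.
  rewrite /Q; have -> : G (pi j) j 0 = Gc pi j 0 by rewrite mxE.
  by rewrite -E addrC subrK.
split=> // j; rewrite E /Q; apply: ltr_wpDl => //.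
by apply: mulr_ge0; [apply: g0| apply: PW0].
Qed.

Lemma opt_exists : (exists pi : 'I_n -> 'I_M, proper pi) ->
  exists pi : 'I_n -> 'I_M, proper pi /\ forall a j, Vp pi j 0 <= Q (Vp pi) a j.
Proof.
case=> pi0 pr0.
have pf : proper [ffun j => pi0 j].
  by rewrite /proper (_ : Bm _ = Bm pi0) //; apply/matrixP => i k; rewrite !mxE ffunE.
case: (@arg_minP _ _ _ [ffun j => pi0 j] (fun p : {ffun 'I_n -> 'I_M} => proper p)
   (fun p : {ffun 'I_n -> 'I_M} => J p) pf) => ps prs minJ.
exists ps; split => //.
have [Veq Vpos] := proper_V prs.
set V := Vp ps in Veq Vpos *.
move=> a j; rewrite leNgt; apply/negP => Hlt.
pose pi' := [ffun k => [arg min_(b < ps k) Q V b k]%O].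
have Qle : forall k, Q V (pi' k) k <= V k 0.
  move=> k; rewrite ffunE; case: (@arg_minP _ _ _ (ps k) xpredT (fun b => Q V b k) isT)
    => b _ hb; by rewrite Veq hb.
have Qj : Q V (pi' j) j < V j 0.
  rewrite ffunE; case: (@arg_minP _ _ _ (ps j) xpredT (fun b => Q V b j) isT) 
    => b _ hb; exact: le_lt_trans (hb a isT) Hlt.
have pr' : proper pi'.
  apply: (proper_of (x := V)) => // k; apply: lt_le_trans (Qle k).
  by rewrite /Q ltrDl.
have [Weq Wpos] := proper_V pr'.
set W := Vp pi' in Weq Wpos.
have D : forall k, (Bm pi' *m (V - W)) k 0 = V k 0 - Q V (pi' k) k.
  move=> k; rewrite mulmxBr mxE [X in _ + X]mxE !BmE.
  by rewrite Weq /Q; ring.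
have VW : forall k, 0 <= (V - W) k 0.
  apply: (nninv_mono pr') => k; rewrite D subr_ge0; exact: Qle.
have VWj : 0 < (V - W) j 0.
  have := D j; rewrite BmE => E.
  have : 0 < V j 0 - Q V (pi' j) j by rewrite subr_gt0.
  rewrite -E => H; apply: lt_le_trans H _; rewrite gerBl.
  by apply: mulr_ge0; [apply: g0| apply: PW0].
have : J pi' < J ps.
  rewrite /J -/V -/W (bigD1 j) //= [X in _ < X](bigD1 j) //=.
  apply: ltr_leD.
    rewrite ltr_pM2l // -subr_gt0; move: VWj; rewrite !mxE. by [].
  apply: ler_sum => k _; rewrite ler_pM2l // -subr_ge0.
  by have := VW k; rewrite mxE [X in 0 <= _ + X]mxE.
by rewrite ltNge minJ.
Qed.

Lemma feas_entry (th : 'I_M -> 'cV[R]_n) : primal_feasible gamma P1 m th ->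
  forall i, m i 0 = \sum_a th a i 0 - gamma * \sum_a \sum_k P1 a k i * th a k 0.
Proof.
case=> _ E i; have := congr1 (fun X : 'cV[R]_n => X i 0) E; rewrite /=.
rewrite !mxE !summxE => E2; rewrite -[m i 0]opprK -E2 opprB; congr (_ - _ * _).
by apply: eq_bigr => a _; rewrite mxE; apply: eq_bigr => k _; rewrite mxE.
Qed.

Lemma feas_s (th : 'I_M -> 'cV[R]_n) : primal_feasible gamma P1 m th ->
  forall i, m i 0 <= \sum_a th a i 0.
Proof.
move=> f i; rewrite (feas_entry f i) gerBl; apply: mulr_ge0; first exact: g0.
case: f => th0 _; apply: sumr_ge0 => a _; apply: sumr_ge0 => k _.
by apply: mulr_ge0.
Qed.

Lemma wd_id (th : 'I_M -> 'cV[R]_n) (W : 'cV[R]_n) : primal_feasible gamma P1 m th ->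
  (m^T *m W) 0 0 = \sum_a \sum_j th a j 0 * (W j 0 - gamma * (P1 a *m W) j 0).
Proof.
move=> f; rewrite mxE.
under eq_bigr => i _ do rewrite mxE (feas_entry f i) mulrBl.
rewrite sumrB.
under [in RHS]eq_bigr => a _ do under eq_bigr => j _ do rewrite mulrBr.
under [in RHS]eq_bigr => a _ do rewrite sumrB.
rewrite sumrB; congr (_ - _).
  rewrite exchange_big; apply: eq_bigr => i _; rewrite mulr_suml.
  by apply: eq_bigr => a _.
under eq_bigr => i _ do rewrite -mulrA mulr_suml mulr_sumr.
rewrite exchange_big; apply: eq_bigr => a _.
under eq_bigr => i _ do rewrite mulr_suml mulr_sumr.
rewrite exchange_big; apply: eq_bigr => k _.
rewrite mxE mulr_sumr mulr_sumr; apply: eq_bigr => i _.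
ring.
Qed.

Lemma objE (th : 'I_M -> 'cV[R]_n) :
  primal_obj G th = \sum_a \sum_j G a j 0 * th a j 0.
Proof.
by apply: eq_bigr => a _; rewrite mxE; apply: eq_bigr => j _; rewrite mxE.
Qed.

Lemma gap (th : 'I_M -> 'cV[R]_n) (W : 'cV[R]_n) : primal_feasible gamma P1 m th ->
  primal_obj G th - (m^T *m W) 0 0 = \sum_a \sum_j th a j 0 * (Q W a j - W j 0).
Proof.
move=> f; rewrite objE (wd_id W f) -sumrB; apply: eq_bigr => a _.
rewrite -sumrB; apply: eq_bigr => j _; rewrite /Q; ring.
Qed.

Lemma weak (th : 'I_M -> 'cV[R]_n) (W : 'cV[R]_n) : primal_feasible gamma P1 m th ->
  dual_feasible gamma P1 G W -> (m^T *m W) 0 0 <= primal_obj G th.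
Proof.
move=> f d; rewrite -subr_ge0 gap //; apply: sumr_ge0 => a _; apply: sumr_ge0 => j _.
apply: mulr_ge0; first by case: f.
by rewrite subr_ge0; apply: d.
Qed.

Lemma exists_proper : (exists th, primal_feasible gamma P1 m th) ->
  exists pi : 'I_n -> 'I_M, proper pi.
Proof.
case=> th f; have th0 : forall a j, 0 <= th a j 0 by case: f.
pose s : 'cV[R]_n := \col_j \sum_a th a j 0.
have s0 : forall j, 0 < s j 0 by move=> j; rewrite mxE; apply: lt_le_trans (feas_s f j).
case: (posnP M) => [M0|Mpos].
  have noj : 'I_n -> False.
    move=> j; have := s0 j; rewrite mxE big1 ?ltxx // => a _.
    by exfalso; have := ltn_ord a; move: (nat_of_ord a); rewrite M0.
  exists (fun j => match noj j with end).
  by apply: (proper_of (x := 0)) => j; case: (noj j).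
have a0 : 'I_M := Ordinal Mpos.
pose w := fun a j => th a j 0 / s j 0.
have w0 : forall a j, 0 <= w a j by move=> a j; apply: divr_ge0 => //; apply: ltW.
have w1 : forall j, \sum_a w a j = 1.
  move=> j; have sE : s j 0 = \sum_a th a j 0 by rewrite mxE.
  by rewrite /w -mulr_suml -sE divff // gt_eqF.
pose A : 'M[R]_n := \matrix_(j, i) (gamma * \sum_a w a j * P1 a j i).
have A0 : forall j i, 0 <= A j i.
  move=> j i; rewrite mxE; apply: mulr_ge0; first exact: g0.
  by apply: sumr_ge0 => a _; apply: mulr_ge0.
have nA : nninv (1%:M - A).
  rewrite -[A]trmxK -[1%:M]tr_scalar_mx -linearB /=; apply: nninv_tr.
  apply: (core_nninv (x := s)) => //.
    by move=> i j; rewrite mxE.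
  move=> i.
  have -> : (A^T *m s) i 0 = gamma * \sum_a \sum_k P1 a k i * th a k 0.
    rewrite mxE mulr_sumr; under [in RHS]eq_bigr => a _ do rewrite mulr_sumr.
    rewrite [in RHS]exchange_big; apply: eq_bigr => j _.
    rewrite !mxE -mulrA mulr_suml mulr_sumr; apply: eq_bigr => a _.
    have sE : s j 0 = \sum_a th a j 0 by rewrite mxE.
    rewrite /w -sE; field. by rewrite gt_eqF.
  have sE : s i 0 = \sum_a th a i 0 by rewrite mxE.
  by rewrite -subr_gt0 sE -feas_entry.
have one0 : forall j, 0 <= (const_mx 1 : 'cV[R]_n) j 0 by move=> j; rewrite mxE.
have [V0 VE] := nninv_solve nA one0.
set V := invmx (1%:M - A) *m const_mx 1 in V0 VE.
have VE2 : forall j, V j 0 = 1 + \sum_k A j k * V k 0.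
  move=> j; have := congr1 (fun X : 'cV[R]_n => X j 0) VE.
  rewrite /= entry1B => E.
  have E1 : (const_mx 1 : 'cV[R]_n) j 0 = 1 by rewrite mxE.
  by rewrite -E1 -E subrK.
have AV : forall j, \sum_k A j k * V k 0 = gamma * \sum_a w a j * (P1 a *m V) j 0.
  move=> j; rewrite mulr_sumr; under eq_bigr => k _ do rewrite mxE -mulrA mulr_suml mulr_sumr.
  rewrite exchange_big; apply: eq_bigr => a _.
  rewrite mxE !mulr_sumr; apply: eq_bigr => k _; ring.
pose pi := fun j => [arg min_(a < a0) (P1 a *m V) j 0]%O.
exists pi; apply: (proper_of (x := V)).
  move=> j; rewrite VE2; apply: ltr_pwDl => //.
  by apply: sumr_ge0 => k _; apply: mulr_ge0.
move=> j; rewrite [X in _ < X]VE2 AV; apply: ltr_pwDl; first exact: ltr01.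
apply: ler_wpM2l; first exact: g0.
rewrite -[X in X <= _]mul1r -(w1 j) mulr_suml; apply: ler_sum => a _.
apply: ler_wpM2l => //; rewrite /pi.
by case: (@arg_minP _ _ _ a0 xpredT (fun b => (P1 b *m V) j 0) isT) => b _ hb; apply: hb.
Qed.

Lemma mE (W : 'cV[R]_n) : (m^T *m W) 0 0 = \sum_j m j 0 * W j 0.
Proof. by rewrite mxE; apply: eq_bigr => j _; rewrite mxE. Qed.

Lemma collapse (p : 'I_M) (f : 'I_M -> R) (c : R) :
  \sum_a f a * (if p == a then c else 0) = f p * c.
Proof.
rewrite (bigD1 p) //= eqxx big1 ?addr0 // => a /negbTE.
by rewrite eq_sym => ->; rewrite mulr0.
Qed.

Lemma mu_eq pi (mu : 'cV[R]_n) : (Bm pi)^T *m mu = m ->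
  gamma *: ((Pclosed P1 pi)^T *m mu) - mu = - m.
Proof.
rewrite /Bm linearB /= tr_scalar_mx linearZ /= mulmxBl mul1mx -scalemxAl => <-.
by rewrite opprB.
Qed.

Lemma Vdom pi (W : 'cV[R]_n) : proper pi ->
  (forall a j, Vp pi j 0 <= Q (Vp pi) a j) ->
  dual_feasible gamma P1 G W -> forall j, W j 0 <= Vp pi j 0.
Proof.
move=> pr Vmin d j; have [Veq _] := proper_V pr.
rewrite -subr_ge0; have -> : Vp pi j 0 - W j 0 = (Vp pi - W) j 0 by rewrite !mxE.
apply: (nninv_mono pr) => k; rewrite mulmxBr mxE [X in _ + X]mxE !BmE.
have := d (pi k) k; rewrite -/(Q W (pi k) k) => dk.
rewrite {1}Veq /Q in dk *; rewrite subr_ge0; lra.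
Qed.

Lemma main_sec : (exists th, primal_feasible gamma P1 m th) ->
  (exists th, primal_optimal gamma P1 G m th) /\
  (exists V, dual_optimal gamma P1 G m V) /\
  forall th V, primal_optimal gamma P1 G m th -> dual_optimal gamma P1 G m V ->
  (forall j, exists a, first_pos th j a) /\
  forall asel : 'I_n -> 'I_M, (forall j, first_pos th j (asel j)) ->
  (forall j, V j 0 = gamma * (P1 (asel j) *m V) j 0 + G (asel j) j 0 /\
     forall a, gamma * (P1 (asel j) *m V) j 0 + G (asel j) j 0
               <= gamma * (P1 a *m V) j 0 + G a j 0) /\
  exists mu : 'cV[R]_n, (forall j, 0 <= mu j 0) /\
    gamma *: ((Pclosed P1 asel)^T *m mu) - mu = - m /\
    lyapunov_measure (Pclosed P1 asel) mu.
Proof.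
move=> hf; have [ps [prs Vmin]] := opt_exists (exists_proper hf).
have [Veq Vpos] := proper_V prs.
set Vs := Vp ps in Veq Vpos Vmin.
have dfs : dual_feasible gamma P1 G Vs by move=> a j; apply: Vmin.
have dom : forall W, dual_feasible gamma P1 G W -> forall j, W j 0 <= Vs j 0.
  by move=> W; apply: Vdom.
have dos : dual_optimal gamma P1 G m Vs.
  split=> // W dW; rewrite !mE; apply: ler_sum => j _.
  by rewrite ler_wpM2l ?dom // ltW.
have m00 : forall j, 0 <= m j 0 by move=> j; apply: ltW.
have [mu0 muE] := nninv_solve (nninv_tr prs) m00.
set mu := invmx (Bm ps)^T *m m in mu0 muE; clearbody mu.
pose ths := fun a : 'I_M => \col_j (if ps j == a then mu j 0 else 0) : 'cV[R]_n.
have fs : primal_feasible gamma P1 m ths.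
  split.
    by move=> a j; rewrite mxE; case: ifP.
  rewrite -(mu_eq muE); congr (_ *: _ - _).
    apply/matrixP => i k; rewrite ord1 summxE !mxE.
    under eq_bigr => a _ do rewrite mxE.
    rewrite exchange_big; apply: eq_bigr => j _; rewrite !mxE.
    under eq_bigr => a _ do rewrite /ths !mxE.
    by rewrite collapse.
  apply/matrixP => i k; rewrite ord1 summxE.
  under eq_bigr => a _ do rewrite /ths mxE -[if _ then _ else _]mul1r.
  by rewrite (collapse _ (fun=> 1)) mul1r.
have objs : primal_obj G ths = (m^T *m Vs) 0 0.
  apply/eqP; rewrite -subr_eq0 gap //; apply/eqP; apply: big1 => a _.
  apply: big1 => j _; rewrite mxE; case: eqP => [<-|]; last by rewrite mul0r.
  by rewrite -Veq subrr mulr0.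
have pos : primal_optimal gamma P1 G m ths.
  by split=> // th' f'; rewrite objs; apply: weak => //.
split; first by exists ths.
split; first by exists Vs.
move=> th V [fth oth] [dV oV].
have c1 : (m^T *m V) 0 0 <= primal_obj G th by apply: weak.
have c2 : primal_obj G th <= (m^T *m Vs) 0 0 by rewrite -objs; apply: oth.
have c3 : (m^T *m Vs) 0 0 <= (m^T *m V) 0 0 by apply: oV.
have VVs : forall j, V j 0 = Vs j 0.
  have S : \sum_j m j 0 * (Vs j 0 - V j 0) = 0.
    under eq_bigr => j _ do rewrite mulrBr.
    rewrite sumrB -!mE; apply/eqP; rewrite subr_eq0 eq_le c3 /=.
    exact: le_trans c1 c2.
  move=> j; have := psumr_eq0P _ S (i := j) isT.
  move=> /(_ _)/eqP; rewrite mulf_eq0 subr_eq0 gt_eqF //= => H.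
    by apply/esym/eqP; apply: H => k _; rewrite mulr_ge0 // ?subr_ge0 ?dom // ltW.
have th0 : forall a j, 0 <= th a j 0 by case: fth.
have CS : forall a j, 0 < th a j 0 -> V j 0 = Q V a j.
  have S : \sum_a \sum_j th a j 0 * (Q V a j - V j 0) = 0.
    rewrite -gap //; apply/eqP; rewrite subr_eq0 eq_le c1 andbT.
    exact: le_trans c2 c3.
  have ge : forall a j, 0 <= th a j 0 * (Q V a j - V j 0).
    by move=> a j; rewrite mulr_ge0 // subr_ge0; apply: dV.
  move=> a j ha.
  have Sa := psumr_eq0P (fun a _ => sumr_ge0 _ (fun j _ => ge a j)) S (i := a) isT.
  have := psumr_eq0P (fun j _ => ge a j) Sa (i := j) isT.
  by move/eqP; rewrite mulf_eq0 gt_eqF //= subr_eq0 => /eqP.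
split.
  move=> j.
  have [a ha] : exists a, 0 < th a j 0.
    case: (boolP [exists a, 0 < th a j 0]) => [/existsP//|/existsPn H].
    have := lt_le_trans (m0 j) (feas_s fth j).
    rewrite ltNge => /negP; case; apply: sumr_le0 => a _.
    by rewrite leNgt; apply: H.
  case: (@arg_minnP _ a (fun b => 0 < th b j 0) (fun b : 'I_M => nat_of_ord b) ha)
    => b hb bmin.
  exists b; split=> // c cb; apply/negP => hc.
  by have := bmin c hc; rewrite leqNgt cb.
move=> asel fp; split.
  move=> j; have [h1 _] := fp j; have E := CS _ _ h1.
  split=> // a; rewrite -/(Q V (asel j) j) -E; exact: dV.
have Vpos' : forall j, 0 < V j 0 by move=> j; rewrite VVs.
have pra : proper asel.
  apply: (proper_of (x := V)) => // j.
  have [h1 _] := fp j; rewrite (CS _ _ h1) /Q.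
  by rewrite ltrDl.
have [mu1 mu1E] := nninv_solve (nninv_tr pra) m00.
exists (invmx (Bm asel)^T *m m); split=> //.
have eq := mu_eq mu1E; split=> //.
split=> //; exists gamma, m; split; [exact: ltW | split=> //].
Qed.
End MDP.

Unset Implicit Arguments.

Theorem theorem2 (R : realFieldType) (n M L : nat)
  (v : 'I_L -> R) (Pal : 'I_M -> 'I_L -> 'M[R]_(n.+1))
  (Gal : 'I_M -> 'I_L -> 'cV[R]_n) (m : 'cV[R]_n) (gamma : R)
  (hv0 : forall l, 0 <= v l) (hv1 : \sum_(l < L) v l = 1)
  (hPal : forall a l, markov (Pal a l))
  (hgamma : 1 < gamma)
  (hfeas : exists theta, primal_feasible gamma
             (fun a => sub1 (Pavg v Pal a)) m theta)
  (hm : forall j, 0 < m j 0)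
  (hG : forall a j, 0 < Gavg v Gal a j 0) :
  let P1 := fun a => sub1 (Pavg v Pal a) in
  let G := Gavg v Gal in
  (* (1) *)
  (exists theta, primal_optimal gamma P1 G m theta) /\
  (exists V, dual_optimal gamma P1 G m V) /\
  forall theta V, primal_optimal gamma P1 G m theta -> dual_optimal gamma P1 G m V ->
  (* (2) a(j) is well defined *)
  (forall j, exists a, first_pos theta j a) /\
  forall asel : 'I_n -> 'I_M, (forall j, first_pos theta j (asel j)) ->
  (* (2) u^{a(j)} is optimal on D_j: it attains the Bellman minimum for V *)
  (forall j, V j 0 = gamma * (P1 (asel j) *m V) j 0 + G (asel j) j 0 /\
     forall a, gamma * (P1 (asel j) *m V) j 0 + G (asel j) j 0
               <= gamma * (P1 a *m V) j 0 + G a j 0) /\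
  (* (3) *)
  exists mu : 'cV[R]_n, (forall j, 0 <= mu j 0) /\
    gamma *: ((Pclosed P1 asel)^T *m mu) - mu = - m /\
    lyapunov_measure (Pclosed P1 asel) mu.
Proof.
move=> P1 G.
have P0 : forall a i j, 0 <= P1 a i j.
  move=> a i j; rewrite /P1 /sub1 /Pavg mxE summxE; apply: sumr_ge0 => l _.
  by rewrite mxE; apply: mulr_ge0 => //; case: (hPal a l).
have G0 : forall a j, 0 < G a j 0 by [].
by apply: main_sec.
Qed.
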